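(* For every reduction $S$ in a TRS the following equivalences hold: (i) $S$ starting in $s$ is strongly $p$-continuous and total iff $S$ starting in $s$ is strongly $m$-continuous; and (ii) $S$ strongly $p$-converges from $s$ to $t$ and is total iff $S$ strongly $m$-converges from $s$ to $t$.
   Context: Partial terms are (possibly infinite) terms over $\Sigma_\bot=\Sigma\uplus\{\bot\}$; total terms contain no $\bot$. $s\le_\bot t$ iff $s$ arises from $t$ by replacing some subterm occurrences by $\bot$; this is a complete semilattice. For a non-empty sequence, $\liminf_{\iota\to\alpha}a_\iota=\bigvee_{\beta<\alpha}\bigwedge_{\beta\le\iota<\alpha}a_\iota$. On total terms $d(s,t)=2^{-k}$, $k$ the minimal depth where they differ. For a reduction $S=(t_\iota\to_{\pi_\iota}t_{\iota+1})_{\iota<\alpha}$ let $c_\iota$ be $t_\iota$ with the subterm at $\pi_\iota$ replaced by $\bot$. $S$ is strongly $p$-continuous if $\liminf_{\iota\to\lambda}c_\iota=t_\lambda$ for every limit $\lambda<\alpha$; it strongly $p$-converges to $t$ if it is strongly $p$-continuous and either $S$ is closed and $t$ is its last term, or $S$ is open and $t=\liminf_{\iota\to\alpha}c_\iota$. $S$ is strongly $m$-continuous if for every limit $\lambda<\alpha$, $\lim_{\iota\to\lambda}t_\iota=t_\lambda$ in $d$ and the depths $|\pi_\iota|$ tend to infinity as $\iota\to\lambda$; it strongly $m$-converges to $t$ if it is strongly $m$-continuous, $t=\lim_{\iota\to\hat\alpha}t_\iota$ ($\hat\alpha=\alpha+1$ for closed, $\alpha$ for open $S$), and, if $S$ is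 open, $|\pi_\iota|$ tends to infinity as $\iota\to\alpha$. ''Total'' means all terms of $S$ and the final term are total. *)

(* Defs.v *)
From Stdlib Require Import List Reals.
Import ListNotations.
Set Implicit Arguments.

(* Positions are lists of argument indices (0-based). *)
Definition pos := list nat.

Inductive label (F V : Type) : Type :=
| Fun : F -> label F V
| Var : V -> label F V
| Bot : label F V.
Arguments Fun {F V} _.
Arguments Var {F V} _.
Arguments Bot {F V}.

(* A (possibly infinite) partial term is a labelling of a tree domain:
   t p = None means p is not a position of t. *)
Definition term (F V : Type) := pos -> option (label F V).

Section Terms.
Variables (F V : Type) (ar : F -> nat).

Definition lab_arity (a : label F V) : nat :=
  match a with Fun f => ar f | _ => 0 end.

Definition wf (t : term F V) : Prop :=
  t [] <> None /\
  forall (p : pos) (i : nat),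
    t (p ++ [i]) <> None <-> exists a, t p = Some a /\ i < lab_arity a.

Definition total (t : term F V) : Prop := forall p, t p <> Some Bot.

Definition finite_term (t : term F V) : Prop :=
  exists n, forall p, t p <> None -> length p <= n.

Definition occurs_var (t : term F V) (x : V) : Prop :=
  exists p, t p = Some (Var x).

Definition is_var_term (t : term F V) : Prop :=
  exists x, t [] = Some (Var x).

Definition subterm (t : term F V) (q : pos) : term F V := fun p => t (q ++ p).

Fixpoint strip (q p : pos) : option pos :=
  match q, p with
  | [], _ => Some p
  | i :: q', j :: p' => if Nat.eqb i j then strip q' p' else None
  | _ :: _, [] => None
  end.

Definition replace (t : term F V) (q : pos) (u : term F V) : term F V :=
  fun p => match strip q p with Some r => u r | None => t p end.

Definition bot_term : term F V :=
  fun p => match p with [] => Some Bot | _ => None end.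

Fixpoint subst_at (sigma : V -> term F V) (t : term F V) (p : pos)
  : option (label F V) :=
  match t [] with
  | Some (Var x) => sigma x p
  | _ => match p with
         | [] => t []
         | i :: p' => subst_at sigma (fun q => t (i :: q)) p'
         end
  end.
Definition subst (sigma : V -> term F V) (t : term F V) : term F V :=
  subst_at sigma t.

Definition is_TRS (R : term F V -> term F V -> Prop) : Prop :=
  forall l r, R l r ->
    wf l /\ wf r /\ total l /\ total r /\ finite_term l /\
    ~ is_var_term l /\ (forall x, occurs_var r x -> occurs_var l x).

Definition step (R : term F V -> term F V -> Prop)
  (s : term F V) (pi : pos) (t : term F V) : Prop :=
  s pi <> None /\
  exists l r (sigma : V -> term F V),
    R l r /\ (forall x, wf (sigma x)) /\
    subterm s pi = subst sigma l /\ t = replace s pi (subst sigma r).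

Definition strict_prefix (q p : pos) : Prop := exists r, r <> [] /\ p = q ++ r.

(* s arises from t by replacing the subterm occurrences at the positions
   in P (positions of t) by bot *)
Definition le_bot (s t : term F V) : Prop :=
  exists P : pos -> Prop,
    (forall q, P q -> t q <> None) /\
    forall p,
      ((exists q, P q /\ strict_prefix q p) -> s p = None) /\
      (~ (exists q, P q /\ strict_prefix q p) -> P p -> s p = Some Bot) /\
      (~ (exists q, P q /\ strict_prefix q p) -> ~ P p -> s p = t p).

Definition is_glb (A : term F V -> Prop) (x : term F V) : Prop :=
  wf x /\ (forall y, A y -> le_bot x y) /\
  (forall z, wf z -> (forall y, A y -> le_bot z y) -> le_bot z x).
Definition is_lub (A : term F V -> Prop) (x : term F V) : Prop :=
  wf x /\ (forall y, A y -> le_bot y x) /\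
  (forall z, wf z -> (forall y, A y -> le_bot y z) -> le_bot x z).

Definition dist (s t : term F V) (r : R) : Prop :=
  (s = t /\ r = 0%R) \/
  (exists k : nat,
      (exists p, length p = k /\ s p <> t p) /\
      (forall p, length p < k -> s p = t p) /\
      r = (/ (2 ^ k))%R).

End Terms.

Definition strict_wellorder (J : Type) (lt : J -> J -> Prop) : Prop :=
  (forall i, ~ lt i i) /\
  (forall i j k, lt i j -> lt j k -> lt i k) /\
  (forall i j, lt i j \/ i = j \/ lt j i) /\
  well_founded lt.

(* A reduction S = (t_i ->_{pi_i} t_{i+1})_{i < alpha} is represented by the
   (nonempty) well-ordered set J of indices of its terms, i.e.
   J = alpha + 1 if S is closed (alpha zero or successor) and J = alpha if S is
   open; its steps are indexed by the elements of J having a successor. *)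
Record reduction (F V : Type) (ar : F -> nat)
  (R : term F V -> term F V -> Prop) : Type := {
  ridx : Type;
  rlt : ridx -> ridx -> Prop;
  r_wo : strict_wellorder rlt;
  r_inh : inhabited ridx;
  rterm : ridx -> term F V;
  rpos : ridx -> pos;
  r_wf : forall i, wf ar (rterm i);
  r_step : forall i j,
      rlt i j -> (forall k, rlt i k -> j = k \/ rlt j k) ->
      step ar R (rterm i) (rpos i) (rterm j)
}.
Arguments ridx {F V ar R} _.
Arguments rlt {F V ar R} _ _ _.
Arguments rterm {F V ar R} _ _.
Arguments rpos {F V ar R} _ _.

Section Reductions.
Variables (F V : Type) (ar : F -> nat) (TR : term F V -> term F V -> Prop).
Variable S : reduction ar TR.

Definition rle (i j : ridx S) : Prop := i = j \/ rlt S i j.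

Definition is_limit (l : ridx S) : Prop :=
  (exists i, rlt S i l) /\
  forall i, rlt S i l -> exists k, rlt S i k /\ rlt S k l.

Definition is_max (m : ridx S) : Prop := forall i, rle i m.
Definition is_min (m : ridx S) : Prop := forall i, rle m i.

(* closed: alpha is zero or a successor, i.e. the term indices have a max *)
Definition closed : Prop := exists m, is_max m.

Definition starts_in (s : term F V) : Prop :=
  forall m, is_min m -> rterm S m = s.

Definition total_red : Prop := forall i, total (rterm S i).

Definition ctx (i : ridx S) : term F V :=
  replace (rterm S i) (rpos S i) (@bot_term F V).

(* x = liminf_{i -> beta} a_i, where dom = {i | i < beta}:
   x = lub_{b<beta} glb_{b <= i < beta} a_i *)
Definition is_liminf (dom : ridx S -> Prop) (a : ridx S -> term F V)
  (x : term F V) : Prop :=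
  exists g : ridx S -> term F V,
    (forall b, dom b ->
       is_glb ar (fun y => exists i, dom i /\ rle b i /\ y = a i) (g b)) /\
    is_lub ar (fun y => exists b, dom b /\ y = g b) x.

Definition is_dlim (dom : ridx S -> Prop) (a : ridx S -> term F V)
  (x : term F V) : Prop :=
  forall eps : R, (0 < eps)%R ->
    exists b, dom b /\
      forall i, dom i -> rle b i -> forall r, dist (a i) x r -> (r < eps)%R.

Definition depth_to_inf (dom : ridx S -> Prop) : Prop :=
  forall n : nat, exists b, dom b /\
    forall i, dom i -> rle b i -> n <= length (rpos S i).

Definition p_continuous : Prop :=
  forall l, is_limit l -> is_liminf (fun i => rlt S i l) ctx (rterm S l).

Definition p_converges (t : term F V) : Prop :=
  p_continuous /\
  ((exists m, is_max m /\ t = rterm S m) \/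
   (~ closed /\ is_liminf (fun _ => True) ctx t)).

(* m-continuity / m-convergence are notions for reductions over total terms *)
Definition m_continuous : Prop :=
  total_red /\
  forall l, is_limit l ->
    is_dlim (fun i => rlt S i l) (rterm S) (rterm S l) /\
    depth_to_inf (fun i => rlt S i l).

Definition m_converges (t : term F V) : Prop :=
  m_continuous /\ total t /\
  ((exists m, is_max m /\ t = rterm S m) \/
   (~ closed /\ is_dlim (fun _ => True) (rterm S) t /\
    depth_to_inf (fun _ => True))).

End Reductions.

(* Main.v *)
Require Import Defs.
From Stdlib Require Import List Reals.
From Stdlib Require Import Lia Lra Classical ClassicalEpsilon FunctionalExtensionality.
Import ListNotations.
Local Notation pos := Defs.pos.

Lemma strip_spec (q p r : pos) : strip q p = Some r <-> p = q ++ r.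
Proof.
  revert p; induction q as [|i q IH]; intros p; simpl.
  - split; intro H; [now inversion H | now subst].
  - destruct p as [|j p].
    + split; intro H; discriminate.
    + destruct (Nat.eqb_spec i j).
      * subst. rewrite IH. split; intro H; [now subst | now inversion H].
      * split; intro H; [discriminate | inversion H; congruence].
Qed.

Lemma strip_none (q p : pos) : strip q p = None <-> ~ exists r, p = q ++ r.
Proof.
  split.
  - intros H [r Hr]. apply strip_spec in Hr. congruence.
  - intros H. destruct (strip q p) eqn:E; auto. exfalso; apply H; exists p0; now apply strip_spec.
Qed.

Lemma sp_nil (q : pos) : ~ strict_prefix q [].
Proof. intros [r [Hr E]]. destruct q, r; simpl in E; congruence. Qed.

Lemma sp_snoc (q p : pos) j : strict_prefix q (p ++ [j]) <-> strict_prefix q p \/ q = p.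
Proof.
  split.
  - intros [r [Hr E]]. destruct (exists_last Hr) as [r' [k E']]. subst r.
    rewrite app_assoc in E. apply app_inj_tail in E as [E1 E2]. subst.
    destruct r' as [|x r'].
    + right. now rewrite app_nil_r.
    + left. exists (x :: r'). split; [discriminate| auto].
  - intros [[r [Hr E]]|E].
    + exists (r ++ [j]). split. { destruct r; [congruence| discriminate]. }
      subst. now rewrite app_assoc.
    + subst. exists [j]. split; [discriminate|auto].
Qed.

Lemma sp_len (q p : pos) : strict_prefix q p -> length q < length p.
Proof. intros [r [Hr E]]. subst. rewrite length_app. destruct r; [congruence|simpl; lia]. Qed.

Lemma sp_app (q r : pos) : r <> [] -> strict_prefix q (q ++ r).
Proof. intros H. exists r; auto. Qed.

Section W.
End W.

Lemma wf_none_ext {F V} (ar : F -> nat) (t : term F V) p r :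
  wf ar t -> t p = None -> t (p ++ r) = None.
Proof.
  intros [H0 H1] Hp. induction r as [|j r IH] using rev_ind.
  - now rewrite app_nil_r.
  - rewrite app_assoc. destruct (t ((p ++ r) ++ [j])) eqn:E; auto.
    assert (Hn : t ((p ++ r) ++ [j]) <> None) by congruence.
    apply H1 in Hn. destruct Hn as [a [Ha _]]. congruence.
Qed.

Lemma wf_bot_ext {F V} (ar : F -> nat) (t : term F V) p r :
  wf ar t -> t p = Some Bot -> r <> [] -> t (p ++ r) = None.
Proof.
  intros Hw Hp Hr. destruct r as [|j r]; [congruence|].
  replace (p ++ j :: r) with ((p ++ [j]) ++ r) by now rewrite <- app_assoc.
  apply (wf_none_ext ar); auto.
  destruct (t (p ++ [j])) eqn:E; auto.
  assert (Hn : t (p ++ [j]) <> None) by congruence.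
  apply (proj2 Hw) in Hn. destruct Hn as [a [Ha Hl]]. rewrite Hp in Ha. inversion Ha; subst.
  simpl in Hl. lia.
Qed.

Lemma wf_anc {F V} (ar : F -> nat) (t : term F V) p r :
  wf ar t -> r <> [] -> t (p ++ r) <> None -> exists a, t p = Some a /\ a <> Bot.
Proof.
  intros Hw Hr Hn. destruct (t p) as [a|] eqn:E.
  - exists a; split; auto. intros ->. apply Hn. now apply (wf_bot_ext ar).
  - exfalso. apply Hn. now apply (wf_none_ext ar t p r).
Qed.

Lemma wf_sp {F V} (ar : F -> nat) (t : term F V) q p :
  wf ar t -> strict_prefix q p -> t p <> None -> exists a, t q = Some a /\ a <> Bot.
Proof. intros Hw [r [Hr E]] Hn. subst. eapply wf_anc; eauto. Qed.

Lemma wf_agree_ext {F V} (ar : F -> nat) (u v : term F V) n :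
  wf ar u -> wf ar v ->
  (forall p, length p <= n -> v p <> None -> u p = v p) ->
  forall p, length p <= n -> u p = v p.
Proof.
  intros Hu Hv H p. induction p as [|j p IH] using rev_ind; intros Hl.
  - apply H; auto. apply Hv.
  - destruct (v (p ++ [j])) eqn:E.
    + rewrite <- E. apply H; auto. congruence.
    + rewrite length_app in Hl; simpl in Hl.
      assert (Hp : u p = v p) by (apply IH; lia).
      destruct (u (p ++ [j])) eqn:E2; auto.
      assert (Hn : u (p ++ [j]) <> None) by congruence.
      apply (proj2 Hu) in Hn. rewrite Hp in Hn. apply (proj2 Hv) in Hn. congruence.
Qed.

Definition lep {F V} (x y : term F V) : Prop :=
  forall p, x p <> None -> (x p = Some Bot /\ y p <> None) \/ x p = y p.

Lemma le_bot_lep {F V} (x y : term F V) : le_bot x y -> lep x y.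
Proof.
  intros [P [HP H]] p Hn. destruct (H p) as [H1 [H2 H3]].
  destruct (classic (exists q, P q /\ strict_prefix q p)) as [Ha|Ha].
  - exfalso; auto.
  - destruct (classic (P p)) as [Hp|Hp].
    + left. split; auto.
    + right. auto.
Qed.

Lemma lep_le_bot {F V} (ar : F -> nat) (x y : term F V) :
  wf ar x -> wf ar y -> lep x y -> le_bot x y.
Proof.
  intros Hx Hy Hl. exists (fun p => x p = Some Bot). split.
  { intros q Hq. destruct (Hl q) as [[_ H]|H]; congruence. }
  intros p. split; [|split].
  - intros [q [Hq [r [Hr E]]]]. subst. apply (wf_bot_ext ar); auto.
  - auto.
  - induction p as [|j p IH] using rev_ind; intros Ha Hp.
    + destruct (Hl []) as [[H _]|H]; auto. apply Hx. congruence.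
    + assert (Ha' : ~ (exists q, x q = Some Bot /\ strict_prefix q p)).
      { intros [q [Hq Hs]]. apply Ha. exists q. split; auto. apply sp_snoc; auto. }
      assert (Hp' : x p <> Some Bot).
      { intros Hq. apply Ha. exists p. split; auto. apply sp_snoc; auto. }
      specialize (IH Ha' Hp').
      destruct (x (p ++ [j])) eqn:E.
      * rewrite <- E. destruct (Hl (p ++ [j])) as [[H _]|H]; auto; congruence.
      * destruct (y (p ++ [j])) eqn:E2; auto.
        assert (Hn : y (p ++ [j]) <> None) by congruence.
        apply (proj2 Hy) in Hn. rewrite <- IH in Hn. apply (proj2 Hx) in Hn. congruence.
Qed.

Lemma replace_out {F V} (t u : term F V) q p :
  ~ (exists r, p = q ++ r) -> replace t q u p = t p.
Proof. intros H. unfold replace. apply strip_none in H. now rewrite H. Qed.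

Lemma replace_in {F V} (t u : term F V) q r :
  replace t q u (q ++ r) = u r.
Proof. unfold replace. assert (strip q (q ++ r) = Some r) by now apply strip_spec. now rewrite H. Qed.

Lemma replace_at {F V} (t u : term F V) q :
  replace t q u q = u [].
Proof. rewrite <- (replace_in t u q []). now rewrite app_nil_r. Qed.

Lemma replace_short {F V} (t u : term F V) q p :
  length p < length q -> replace t q u p = t p.
Proof. intros H. apply replace_out. intros [r E]. subst. rewrite length_app in H. lia. Qed.

Lemma wf_replace_bot {F V} (ar : F -> nat) (t : term F V) q :
  wf ar t -> t q <> None -> wf ar (replace t q (bot_term F V)).
Proof.
  intros Hw Hq. split.
  - destruct q as [|i q].
    + unfold replace; simpl. discriminate.
    + rewrite replace_out. apply Hw. intros [r E]. discriminate.
  - intros p i.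
    destruct (classic (exists r, p = q ++ r)) as [[r E]|Hn].
    + subst. rewrite <- app_assoc, !replace_in. unfold bot_term.
      destruct r; simpl; (split; [intro H; congruence | intros [a [Ha Hl]]; inversion Ha; subst; simpl in Hl; lia]).
    + rewrite (replace_out _ _ _ p Hn).
      destruct (classic (p ++ [i] = q)) as [E|E].
      * subst. rewrite replace_at. simpl.
        split; intros _; [|discriminate]. apply Hw. exact Hq.
      * rewrite replace_out. { apply Hw. }
        intros [r Er]. destruct r as [|k r] using rev_ind.
        { rewrite app_nil_r in Er. auto. }
        rewrite app_assoc in Er. apply app_inj_tail in Er as [E1 E2]. apply Hn; eauto.
Qed.

Definition cl {F V} (A : term F V -> Prop) (q : pos) : Prop :=
  exists a, a <> Bot /\ forall y, A y -> y q = Some a.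

Definition pc {F V} (A : term F V -> Prop) (p : pos) : Prop :=
  forall q, strict_prefix q p -> cl A q.

Definition Gt {F V} (A : term F V -> Prop) : term F V := fun p =>
  if excluded_middle_informative (pc A p) then
    match excluded_middle_informative (exists a, forall y, A y -> y p = Some a) with
    | left H => Some (proj1_sig (constructive_indefinite_description _ H))
    | right _ =>
        if excluded_middle_informative (forall y, A y -> y p <> None) then Some Bot else None
    end
  else None.

Lemma Gt_some {F V} (A : term F V -> Prop) p a :
  Gt A p = Some a -> pc A p /\ ((forall y, A y -> y p = Some a) \/
                                (a = Bot /\ forall y, A y -> y p <> None)).
Proof.
  unfold Gt. destruct (excluded_middle_informative (pc A p)); [|discriminate].
  destruct (excluded_middle_informative _) as [H|H].
  - destruct (constructive_indefinite_description _ H) as [b Hb]. simpl. intros E; inversion E; subst.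
    auto.
  - destruct (excluded_middle_informative _); [|discriminate]. intros E; inversion E; subst; auto.
Qed.

Lemma Gt_common {F V} (A : term F V -> Prop) p a y0 :
  A y0 -> pc A p -> (forall y, A y -> y p = Some a) -> Gt A p = Some a.
Proof.
  intros H0 Hp Ha. unfold Gt. destruct (excluded_middle_informative (pc A p)); [|contradiction].
  destruct (excluded_middle_informative _) as [H|H].
  - destruct (constructive_indefinite_description _ H) as [b Hb]. simpl.
    rewrite <- (Ha y0 H0), (Hb y0 H0). auto.
  - exfalso; eauto.
Qed.

Lemma Gt_nonnone {F V} (A : term F V -> Prop) p :
  pc A p -> (forall y, A y -> y p <> None) -> Gt A p <> None.
Proof.
  intros Hp Ha. unfold Gt. destruct (excluded_middle_informative (pc A p)); [|contradiction].
  destruct (excluded_middle_informative _) as [H|H]; [discriminate|].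
  destruct (excluded_middle_informative _); [discriminate|contradiction].
Qed.

Lemma Gt_none {F V} (A : term F V -> Prop) p :
  Gt A p = None -> ~ pc A p \/ ~ (forall y, A y -> y p <> None).
Proof.
  intros E. destruct (classic (pc A p)) as [Hp|Hp]; auto. right. intros Ha.
  exact (Gt_nonnone A p Hp Ha E).
Qed.

Lemma pc_snoc {F V} (A : term F V -> Prop) p j :
  pc A (p ++ [j]) <-> pc A p /\ cl A p.
Proof.
  split.
  - intros H. split.
    + intros q Hq. apply H. apply sp_snoc. auto.
    + apply H. apply sp_snoc. auto.
  - intros [H1 H2] q Hq. apply sp_snoc in Hq as [Hq|Hq]; subst; auto.
Qed.

Lemma Gt_glb {F V} (ar : F -> nat) (A : term F V -> Prop) y0 :
  A y0 -> (forall y, A y -> wf ar y) -> is_glb ar A (Gt A).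
Proof.
  intros H0 Hw.
  assert (Hwf : wf ar (Gt A)).
  { split.
    - assert (pc A []) by (intros q Hq; exfalso; exact (sp_nil q Hq)).
      apply Gt_nonnone; auto. intros y Hy. apply (Hw y Hy).
    - intros p i. split.
      + intros Hn. destruct (Gt A (p ++ [i])) as [b|] eqn:E; [|congruence].
        apply Gt_some in E as [Hpc Hb]. apply pc_snoc in Hpc as [Hpc [a [Ha Hya]]].
        exists a. split. { eapply Gt_common; eauto. }
        assert (Hn0 : y0 (p ++ [i]) <> None).
        { destruct Hb as [Hb|[_ Hb]]; [rewrite (Hb y0 H0); discriminate| auto]. }
        apply (proj2 (Hw y0 H0)) in Hn0. destruct Hn0 as [a' [Ha' Hl]].
        rewrite (Hya y0 H0) in Ha'. inversion Ha'; subst; auto.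
      + intros [a [Ha Hl]]. apply Gt_some in Ha as [Hpc Hb].
        destruct Hb as [Hb|[Hb _]].
        * assert (a <> Bot) by (intros ->; simpl in Hl; lia).
          apply Gt_nonnone. { apply pc_snoc. split; auto. exists a; auto. }
          intros y Hy. apply (proj2 (Hw y Hy)). exists a; auto.
        * subst. simpl in Hl. lia. }
  split; [exact Hwf|split].
  - intros y Hy. apply (lep_le_bot ar); auto. intros p Hn.
    destruct (Gt A p) as [a|] eqn:E; [|congruence].
    apply Gt_some in E as [_ [Hb|[-> Hb]]]; [right; symmetry; auto | left; split; auto].
  - intros z Hz Hlb. apply (lep_le_bot ar); auto. intros p Hn.
    assert (Hl : forall y, A y -> lep z y) by (intros y Hy; apply le_bot_lep; auto).
    assert (Hpc : pc A p).
    { intros q Hq. destruct (wf_sp ar z q p Hz Hq Hn) as [a [Ha Hab]].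
      exists a. split; auto. intros y Hy. destruct (Hl y Hy q) as [[H1 _]|H1]; congruence. }
    destruct (z p) as [a|] eqn:E; [|congruence].
    destruct (classic (a = Bot)) as [->|Hab].
    + left. split; auto. apply Gt_nonnone; auto. intros y Hy.
      destruct (Hl y Hy p) as [[_ H1]|H1]; congruence.
    + right. symmetry. eapply Gt_common; eauto. intros y Hy.
      destruct (Hl y Hy p) as [[H1 _]|H1]; congruence.
Qed.

Lemma Gt_agree {F V} (ar : F -> nat) (A : term F V -> Prop) y0 (x : term F V) n :
  A y0 -> wf ar x -> total x ->
  (forall y, A y -> forall q, length q <= n -> y q = x q) ->
  forall p, length p <= n -> x p <> None -> Gt A p = x p.
Proof.
  intros H0 Hx Ht Hag p Hp Hn.
  destruct (x p) as [a|] eqn:E; [|congruence].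
  apply (Gt_common A p a y0); auto.
  - intros q Hq. destruct (wf_sp ar x q p Hx Hq ltac:(congruence)) as [b [Hb Hbb]].
    exists b. split; auto. intros y Hy. rewrite Hag; auto. apply sp_len in Hq; lia.
  - intros y Hy. rewrite Hag; auto.
Qed.

Lemma rle_refl {F V ar TR} (S : reduction (F:=F) (V:=V) ar TR) i : rle S i i.
Proof. now left. Qed.

Lemma rle_trans {F V ar TR} (S : reduction (F:=F) (V:=V) ar TR) i j k :
  rle S i j -> rle S j k -> rle S i k.
Proof.
  destruct (r_wo S) as [_ [Ht _]].
  intros [->|H1] [->|H2]; unfold rle; eauto.
Qed.

Lemma rmax {F V ar TR} (S : reduction (F:=F) (V:=V) ar TR) (P : ridx S -> Prop) b1 b2 :
  P b1 -> P b2 -> exists b, P b /\ rle S b1 b /\ rle S b2 b.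
Proof.
  destruct (r_wo S) as [_ [_ [Htot _]]]. intros H1 H2.
  destruct (Htot b1 b2) as [H|[H|H]].
  - exists b2. split; auto. split; [now right| now left].
  - subst. exists b2. split; auto. split; now left.
  - exists b1. split; auto. split; [now left| now right].
Qed.

Definition Good {F V ar TR} (S : reduction (F:=F) (V:=V) ar TR) (dom : ridx S -> Prop)
  (x : term F V) (n : nat) (b : ridx S) : Prop :=
  dom b /\ forall i, dom i -> rle S b i ->
    n < length (rpos S i) /\ forall p, length p <= n -> rterm S i p = x p.

Lemma wf_ctx {F V ar TR} (S : reduction (F:=F) (V:=V) ar TR) i :
  rterm S i (rpos S i) <> None -> wf ar (ctx S i).
Proof. intros H. apply wf_replace_bot; auto. apply r_wf. Qed.

Lemma ctx_short {F V ar TR} (S : reduction (F:=F) (V:=V) ar TR) i p :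
  length p < length (rpos S i) -> ctx S i p = rterm S i p.
Proof. intros H. unfold ctx. now apply replace_short. Qed.

Lemma lemmaA {F V ar TR} (S : reduction (F:=F) (V:=V) ar TR) (dom : ridx S -> Prop) x :
  (forall i, dom i -> rterm S i (rpos S i) <> None) ->
  wf ar x -> total x -> (forall n, exists b, Good S dom x n b) ->
  is_liminf S dom (ctx S) x.
Proof.
  intros Hpos Hx Ht HG.
  set (C := fun b y => exists i, dom i /\ rle S b i /\ y = ctx S i).
  assert (HC : forall b, dom b -> is_glb ar (C b) (Gt (C b))).
  { intros b Hb. apply (Gt_glb ar (C b) (ctx S b)).
    - exists b; repeat split; auto. now left.
    - intros y [i [Hi [_ ->]]]. apply wf_ctx; auto. }
  assert (HCa : forall n b, Good S dom x n b -> forall y, C b y -> forall q, length q <= n -> y q = x q).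
  { intros n b [Hb Hg] y [i [Hi [Hbi ->]]] q Hq. destruct (Hg i Hi Hbi) as [Hl Ha].
    rewrite ctx_short by lia. auto. }
  exists (fun b => Gt (C b)). split.
  - intros b Hb. apply HC; auto.
  - split; [exact Hx|split].
    + intros y [b [Hb ->]]. apply (lep_le_bot ar); auto. { apply HC; auto. }
      intros p Hn. destruct (HG (length p)) as [b' Hg'].
      destruct (rmax S dom b b' Hb (proj1 Hg')) as [i [Hi [Hbi Hb'i]]].
      assert (Hc : C b (ctx S i)) by (exists i; auto).
      assert (Hlb : le_bot (Gt (C b)) (ctx S i)) by (apply (HC b Hb); auto).
      assert (Hl := le_bot_lep _ _ Hlb p Hn).
      assert (Hc' : C b' (ctx S i)) by (exists i; auto).
      rewrite (HCa _ _ Hg' (ctx S i) Hc' p (le_n _)) in Hl.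
      exact Hl.
    + intros z Hz Hub. apply (lep_le_bot ar); auto. intros p Hn.
      destruct (HG (length p)) as [b' Hg'].
      assert (Ha : Gt (C b') p = x p).
      { apply (Gt_agree ar (C b') (ctx S b') x (length p)); auto.
        - exists b'. repeat split; auto. apply Hg'. now left.
        - apply (HCa (length p) b'); auto. }
      assert (Hlb : le_bot (Gt (C b')) z) by (apply Hub; exists b'; split; auto; apply Hg').
      assert (Hle := le_bot_lep _ _ Hlb p).
      rewrite Ha in Hle. destruct (Hle Hn) as [[H1 _]|H1]; auto.
Qed.

Lemma lemmaB {F V ar TR} (S : reduction (F:=F) (V:=V) ar TR) (dom : ridx S -> Prop) x :
  (forall i, dom i -> rterm S i (rpos S i) <> None) ->
  total x -> is_liminf S dom (ctx S) x ->
  forall n, exists b, Good S dom x n b.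
Proof.
  intros Hpos Ht [g [Hglb [Hx [Hub Hleast]]]].
  set (C := fun b y => exists i, dom i /\ rle S b i /\ y = ctx S i).
  assert (Hwg : forall b, dom b -> wf ar (g b)) by (intros b Hb; apply (Hglb b Hb)).
  assert (Hmono : forall b b', dom b -> dom b' -> rle S b b' -> lep (g b) (g b')).
  { intros b b' Hb Hb' Hbb. apply le_bot_lep. apply (Hglb b' Hb'); auto.
    intros y [i [Hi [Hbi ->]]]. apply (Hglb b Hb). exists i. split; auto. split; auto.
    eapply rle_trans; eauto. }
  assert (Hgx : forall b, dom b -> lep (g b) x).
  { intros b Hb. apply le_bot_lep. apply Hub. exists b; auto. }
  assert (Hstep2 : forall p, x p <> None -> exists b, dom b /\ g b p = x p).
  { intros p Hp. apply NNPP. intros Hno.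
    assert (Hz : wf ar (replace x p (bot_term F V))) by (apply wf_replace_bot; auto).
    assert (Hle : le_bot x (replace x p (bot_term F V))).
    { apply Hleast; auto. intros y [b [Hb ->]]. apply (lep_le_bot ar); auto.
      intros q Hq. destruct (Hgx b Hb q Hq) as [[H1 H2]|H1].
      - destruct (classic (exists r, q = p ++ r)) as [[r ->]|Hn].
        + rewrite replace_in. left. split; auto. destruct r; simpl; [discriminate|].
          exfalso. destruct (wf_anc ar (g b) p (n :: r) (Hwg b Hb) ltac:(discriminate) Hq) as [a [Ha Hab]].
          destruct (Hgx b Hb p ltac:(congruence)) as [[H3 _]|H3]; [congruence|].
          apply Hno. exists b. split; auto; congruence.
        + rewrite replace_out; auto.
      - destruct (classic (exists r, q = p ++ r)) as [[r ->]|Hn].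
        + rewrite replace_in. destruct r; simpl.
          * rewrite app_nil_r in *. exfalso. apply Hno. exists b; auto.
          * exfalso. destruct (wf_anc ar (g b) p (n :: r) (Hwg b Hb) ltac:(discriminate) Hq) as [a [Ha Hab]].
            destruct (Hgx b Hb p ltac:(congruence)) as [[H3 _]|H3]; [congruence|].
            apply Hno. exists b. split; auto; congruence.
        + rewrite replace_out; auto. }
    apply le_bot_lep in Hle. destruct (Hle p Hp) as [[H1 _]|H1].
    - exact (Ht p H1).
    - rewrite replace_at in H1. exact (Ht p H1). }
  assert (Hupw : forall b b' q, dom b -> dom b' -> rle S b b' -> x q <> None -> g b q = x q -> g b' q = x q).
  { intros b b' q Hb Hb' Hbb Hq E. destruct (Hmono b b' Hb Hb' Hbb q ltac:(congruence)) as [[H1 _]|H1].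
    - exfalso. apply (Ht q). congruence.
    - congruence. }
  assert (Hunif : forall m p, x p <> None -> exists b, dom b /\
            forall r, length r <= m -> x (p ++ r) <> None -> g b (p ++ r) = x (p ++ r)).
  { induction m as [|m IH]; intros p Hp.
    - destruct (Hstep2 p Hp) as [b [Hb E]]. exists b. split; auto.
      intros r Hr _. destruct r; simpl in Hr; [|lia]. now rewrite app_nil_r.
    - destruct (x p) as [a|] eqn:Ea; [|congruence].
      assert (Hk : forall k, exists b, dom b /\ g b p = x p /\
                 forall j, j < k -> j < lab_arity ar a -> forall r, length r <= m ->
                   x ((p ++ [j]) ++ r) <> None -> g b ((p ++ [j]) ++ r) = x ((p ++ [j]) ++ r)).
      { induction k as [|k IHk].
        - destruct (Hstep2 p ltac:(congruence)) as [b [Hb E]]. exists b. repeat split; auto. intros; lia.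
        - destruct IHk as [b1 [Hb1 [E1 H1]]].
          destruct (classic (k < lab_arity ar a)) as [Hka|Hka].
          + assert (Hc : x (p ++ [k]) <> None) by (apply (proj2 Hx); exists a; auto).
            destruct (IH _ Hc) as [b2 [Hb2 H2]].
            destruct (rmax S dom b1 b2 Hb1 Hb2) as [b [Hb [H1b H2b]]].
            exists b. split; auto. split.
            { apply (Hupw b1); auto. rewrite Ea; discriminate. }
            intros j Hj Hja r Hr Hxr. apply (Hupw (if Nat.eq_dec j k then b2 else b1)); auto.
            * destruct (Nat.eq_dec j k); auto.
            * destruct (Nat.eq_dec j k); auto.
            * destruct (Nat.eq_dec j k); [subst; auto| apply H1; auto; lia].
          + exists b1. repeat split; auto. intros j Hj Hja. apply H1; lia. }
      destruct (Hk (lab_arity ar a)) as [b [Hb [E H]]]. exists b. split; auto.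
      intros r Hr Hxr. destruct r as [|j r].
      + now rewrite app_nil_r.
      + assert (Hj : j < lab_arity ar a).
        { assert (Hc : x (p ++ [j]) <> None).
          { intros E2. apply Hxr. replace (p ++ j :: r) with ((p ++ [j]) ++ r) by now rewrite <- app_assoc.
            now apply (wf_none_ext ar). }
          apply (proj2 Hx) in Hc. destruct Hc as [a' [Ha' Hl]]. congruence. }
        replace (p ++ j :: r) with ((p ++ [j]) ++ r) in * by now rewrite <- app_assoc.
        apply H; auto. simpl in Hr; lia. }
  intros n. destruct (Hunif n [] (proj1 Hx)) as [b [Hb H]]. exists b. split; auto.
  intros i Hi Hbi.
  assert (Hc : forall p, length p <= n -> ctx S i p = x p).
  { apply (wf_agree_ext ar). { apply wf_ctx; auto. } { auto. }
    intros p Hp Hxp. specialize (H p Hp Hxp). simpl in H.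
    assert (Hl : le_bot (g b) (ctx S i)) by (apply (Hglb b Hb); exists i; auto).
    destruct (le_bot_lep _ _ Hl p ltac:(congruence)) as [[H1 _]|H1].
    - exfalso. apply (Ht p). congruence.
    - congruence. }
  assert (Hlen : n < length (rpos S i)).
  { destruct (Nat.lt_ge_cases n (length (rpos S i))) as [?|Hge]; auto. exfalso.
    specialize (Hc (rpos S i) Hge). unfold ctx in Hc. rewrite replace_at in Hc. simpl in Hc.
    apply (Ht (rpos S i)). auto. }
  split; auto. intros p Hp. rewrite <- (ctx_short S i p) by lia. auto.
Qed.

Lemma min_diff {F V} (s t : term F V) m : forall p, length p <= m -> s p <> t p ->
  exists q, length q <= length p /\ s q <> t q /\ forall q', length q' < length q -> s q' = t q'.
Proof.
  induction m as [|m IH]; intros p Hp Hd.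
  - exists p. repeat split; auto. intros q' Hq'. lia.
  - destruct (classic (exists q', length q' < length p /\ s q' <> t q')) as [[q' [Hq' Hd']]|Hno].
    + destruct (IH q') as [q [H1 H2]]; auto; try lia. exists q. split; auto; lia.
    + exists p. repeat split; auto. intros q' Hq'. apply NNPP. intros Hd'. apply Hno; eauto.
Qed.

Lemma inv_pow_le (k n : nat) : (k <= n)%nat -> (/ 2 ^ n <= / 2 ^ k)%R.
Proof. intros H. apply Rinv_le_contravar. { apply pow_lt; lra. } apply Rle_pow; auto; lra. Qed.

Lemma M1 {F V ar TR} (S : reduction (F:=F) (V:=V) ar TR) (dom : ridx S -> Prop) x :
  is_dlim S dom (rterm S) x -> depth_to_inf S dom -> forall n, exists b, Good S dom x n b.
Proof.
  intros Hd Hdep n.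
  destruct (Hd (/ 2 ^ n)%R) as [b1 [Hb1 H1]]. { apply Rinv_0_lt_compat, pow_lt; lra. }
  destruct (Hdep (Nat.succ n)) as [b2 [Hb2 H2]].
  destruct (rmax S dom b1 b2 Hb1 Hb2) as [b [Hb [Hb1b Hb2b]]].
  exists b. split; auto. intros i Hi Hbi. split.
  - apply H2; auto. eapply rle_trans; eauto.
  - intros p Hp. apply NNPP. intros Hne.
    destruct (min_diff (rterm S i) x n p Hp Hne) as [q [Hq1 [Hq2 Hq3]]].
    assert (Hdist : Defs.dist (rterm S i) x (/ 2 ^ length q)%R).
    { right. exists (length q). split; [exists q; auto|]. split; auto. }
    specialize (H1 i Hi ltac:(eapply rle_trans; eauto) _ Hdist).
    assert (Hle := inv_pow_le (length q) n ltac:(lia)). lra.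
Qed.

Lemma M2 {F V ar TR} (S : reduction (F:=F) (V:=V) ar TR) (dom : ridx S -> Prop) x :
  (forall n, exists b, Good S dom x n b) -> is_dlim S dom (rterm S) x /\ depth_to_inf S dom.
Proof.
  intros HG. split.
  - intros eps Heps.
    destruct (pow_lt_1_zero (/ 2) ltac:(rewrite Rabs_pos_eq; lra) eps Heps) as [N HN].
    specialize (HN N (le_n _)). rewrite pow_inv, Rabs_pos_eq in HN.
    2:{ left. apply Rinv_0_lt_compat, pow_lt; lra. }
    destruct (HG N) as [b [Hb H]]. exists b. split; auto.
    intros i Hi Hbi r Hr. destruct (H i Hi Hbi) as [_ Ha].
    destruct Hr as [[_ ->]|[k [[p [Hpk Hpd]] [_ ->]]]]; [lra|].
    assert (Hk : (N < k)%nat).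
    { destruct (Nat.lt_ge_cases N k); auto. exfalso. apply Hpd. apply Ha. lia. }
    assert (Hle := inv_pow_le N k ltac:(lia)). lra.
  - intros n. destruct (HG n) as [b [Hb H]]. exists b. split; auto.
    intros i Hi Hbi. destruct (H i Hi Hbi). lia.
Qed.

Lemma wf_of_good {F V ar TR} (S : reduction (F:=F) (V:=V) ar TR) (dom : ridx S -> Prop) x :
  (forall n, exists b, Good S dom x n b) -> wf ar x.
Proof.
  intros HG. split.
  - destruct (HG 0) as [b [Hb H]]. destruct (H b Hb (rle_refl S b)) as [_ Ha].
    rewrite <- (Ha []) by (simpl; lia). apply (proj1 (r_wf S b)).
  - intros p i. destruct (HG (Nat.succ (length p))) as [b [Hb H]].
    destruct (H b Hb (rle_refl S b)) as [_ Ha].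
    rewrite <- (Ha p) by apply Nat.le_succ_diag_r. rewrite <- (Ha (p ++ [i])) by (rewrite length_app, Nat.add_1_r; apply le_n).
    apply (proj2 (r_wf S b)).
Qed.

Lemma succ_exists {F V ar TR} (S : reduction (F:=F) (V:=V) ar TR) i k :
  rlt S i k -> rterm S i (rpos S i) <> None.
Proof.
  destruct (r_wo S) as [Hirr [Htr [Htot Hwf]]].
  intros Hik.
  assert (Hj : exists j, rlt S i j /\ forall k, rlt S i k -> j = k \/ rlt S j k).
  { induction k as [k IH] using (well_founded_ind Hwf).
    destruct (classic (exists k', rlt S i k' /\ rlt S k' k)) as [[k' [H1 H2]]|Hno].
    - apply (IH k'); auto.
    - exists k. split; auto. intros k' Hk'. destruct (Htot k k') as [H|[H|H]]; auto.
      exfalso; eauto. }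
  destruct Hj as [j [Hij Hmin]]. apply (r_step S i Hij Hmin).
Qed.

Lemma open_succ {F V ar TR} (S : reduction (F:=F) (V:=V) ar TR) :
  ~ closed S -> forall i, exists k, rlt S i k.
Proof.
  destruct (r_wo S) as [Hirr [Htr [Htot Hwf]]].
  intros Hc i. apply NNPP. intros Hn. apply Hc. exists i. intros j.
  destruct (Htot j i) as [H|[H|H]]; unfold rle; auto. exfalso; eauto.
Qed.

Theorem theorem4p12 (F V : Type) (ar : F -> nat)
  (R : term F V -> term F V -> Prop) (HR : is_TRS ar R)
  (S : reduction ar R) (s : term F V) (Hs : starts_in S s) :
  (p_continuous S /\ total_red S <-> m_continuous S) /\
  (forall t : term F V,
      p_converges S t /\ total_red S /\ total t <-> m_converges S t).
Proof.
  assert (Hi : p_continuous S /\ total_red S <-> m_continuous S).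
  { split.
    - intros [Hp Ht]. split; auto. intros l Hl. apply M2.
      apply (lemmaB S (fun i => rlt S i l) (rterm S l)); auto.
      + intros i Hil. apply (succ_exists S i l Hil).
    - intros [Ht Hm]. split; auto. intros l Hl. destruct (Hm l Hl) as [Hd Hdep].
      apply lemmaA; auto.
      + intros i Hil. apply (succ_exists S i l Hil).
      + apply r_wf.
      + apply M1; auto. }
  split; auto. intros t. split.
  - intros [[Hpc Hdisj] [Ht Htt]].
    assert (Hm : m_continuous S) by (apply Hi; auto).
    split; auto. split; auto.
    destruct Hdisj as [Hc|[Hnc Hlim]]; [left; auto| right].
    split; auto. apply M2. apply (lemmaB S (fun _ => True) t); auto.
    intros i _. destruct (open_succ S Hnc i) as [k Hk]. apply (succ_exists S i k Hk).
  - intros [Hm [Htt Hdisj]].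
    assert (Hpt : p_continuous S /\ total_red S) by (apply Hi; auto).
    destruct Hpt as [Hpc Ht].
    split; [split; auto|split; auto].
    destruct Hdisj as [Hc|[Hnc [Hd Hdep]]]; [left; auto| right].
    split; auto.
    assert (HG := M1 S (fun _ => True) t Hd Hdep).
    apply lemmaA; auto.
    + intros i _. destruct (open_succ S Hnc i) as [k Hk]. apply (succ_exists S i k Hk).
    + apply (wf_of_good S (fun _ => True)); auto.
Qed.
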